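(* Let $\Pi_0$ be a group and $\Pi_1$, $M$ abelian $\Pi_0$-modules. Let $E$ be the crossed module with group part $\Pi_0$, module part $\Pi_1$ (with its given $\Pi_0$-action) and trivial structure morphism $\Pi_1\to\Pi_0$. Then $H^2(E,M)\cong\operatorname{Hom}_{\Pi_0}(\Pi_1,M)\oplus H^2(\Pi_0,M)$.
   Context: For a crossed module $V=(G_V,M_V,\mu)$ (left action ${}^gm$, $\mu({}^gm)=g\mu(m)g^{-1}$, ${}^{\mu(n)}m=nmn^{-1}$) with $\pi_0(V)=G_V/\mu(M_V)$ and an abelian $\pi_0(V)$-module $M$, $H^2(V,M)$ is the second cohomology of the complex $C^1(V,M)=\mathrm{Map}(G_V,M)\to C^2(V,M)=\mathrm{Map}(M_V\times G_V\times G_V,M)\to C^3(V,M)=\mathrm{Map}(M_V\times M_V\times G_V\times M_V\times G_V\times G_V,M)$ with $(dc)(m,h,g)=c(\mu(m)h)-c(hg)+\bar hc(g)$, $(dc)(p,n,k,m,h,g)=c(p,\mu(n)k,\mu(m)h)-c(pn,k,hg)+c(n\,{}^km,kh,g)-\bar kc(m,h,g)$, where $\bar g$ is the class of $g$ in $\pi_0(V)$. $H^2(\Pi_0,M)$ is ordinary group cohomology. *)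

(* Defs.v *)
From HB Require Import structures.
From mathcomp Require Import all_boot all_algebra.
Set Implicit Arguments. Unset Strict Implicit. Unset Printing Implicit Defensive.
Import GRing.Theory.
Local Open Scope ring_scope.

Record group_axioms (G : Type) (mul : G -> G -> G) (one : G) (inv : G -> G)
  : Prop := GroupAxioms {
  grp_mulA : forall x y z, mul x (mul y z) = mul (mul x y) z;
  grp_mul1g : forall x, mul one x = x;
  grp_mulVg : forall x, mul (inv x) x = one }.

Record module_axioms (G : Type) (mul : G -> G -> G) (one : G)
  (A : zmodType) (act : G -> A -> A) : Prop := ModuleAxioms {
  mod_act1 : forall a, act one a = a;
  mod_actM : forall g h a, act (mul g h) a = act g (act h a);
  mod_actD : forall g a b, act g (a + b) = act g a + act g b }.

Definition is_equiv_hom (G : Type) (P A : zmodType)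
  (actP : G -> P -> P) (actA : G -> A -> A) (phi : P -> A) : Prop :=
  (forall x y, phi (x + y) = phi x + phi y) /\
  (forall g x, phi (actP g x) = actA g (phi x)).

Definition grp_Z2 (G : Type) (mul : G -> G -> G) (A : zmodType)
  (actA : G -> A -> A) (c : G -> G -> A) : Prop :=
  forall g h k, actA g (c h k) - c (mul g h) k + c g (mul h k) - c g h = 0.

Definition grp_B2 (G : Type) (mul : G -> G -> G) (A : zmodType)
  (actA : G -> A -> A) (c : G -> G -> A) : Prop :=
  exists f : G -> A, forall g h, c g h = actA g (f h) - f (mul g h) + f g.

(* ---------- Cochain complex of a crossed module V = (G_V, M_V, mu) ----------
   mulG : product of G_V, mulM : product of M_V, actV : action of G_V on M_V,
   mu : M_V -> G_V, actA : action of G_V on the coefficient module A through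
   pi_0(V) (i.e.  bar g . a  is written  actA g a). *)
Section CrossedCochains.
Variables (GV MV : Type) (mulG : GV -> GV -> GV) (mulM : MV -> MV -> MV)
  (actV : GV -> MV -> MV) (mu : MV -> GV) (A : zmodType) (actA : GV -> A -> A).

Definition xd1 (c : GV -> A) : MV -> GV -> GV -> A :=
  fun m h g => c (mulG (mu m) h) - c (mulG h g) + actA h (c g).

Definition xd2 (c : MV -> GV -> GV -> A) :
  MV -> MV -> GV -> MV -> GV -> GV -> A :=
  fun p n k m h g =>
    c p (mulG (mu n) k) (mulG (mu m) h) - c (mulM p n) k (mulG h g)
    + c (mulM n (actV k m)) (mulG k h) g - actA k (c m h g).

Definition xZ2 (c : MV -> GV -> GV -> A) : Prop :=
  forall p n k m h g, xd2 c p n k m h g = 0.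

Definition xB2 (c : MV -> GV -> GV -> A) : Prop :=
  exists f : GV -> A, forall m h g, c m h g = xd1 f m h g.
End CrossedCochains.

(* Main.v *)
Require Import Defs.
From HB Require Import structures.
From mathcomp Require Import all_boot all_algebra.
Import GRing.Theory.
Local Open Scope ring_scope.

Lemma split4 (A : zmodType) (a b c d x y u v : A) :
  (a + x) - (b + y) + (c + u) - (d + v) = (a - b + c - d) + (x - y + u - v).
Proof. by rewrite !opprD (addrACA a x) (addrACA (a - b) (x - y)) (addrACA (a - b + c)). Qed.

Lemma neg4 (A : zmodType) (a b c d : A) :
  a - b + c - d = 0 -> d - c + b - a = 0.
Proof. move=> H; have : -(a - b + c - d) = 0 by rewrite H oppr0.
rewrite opprB opprD opprB => <-.
rewrite -!addrA; congr (_ + _). by rewrite addrCA (addrC (- c)). Qed.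

Lemma reord (A : zmodType) (a b c : A) : c - b + a = a - b + c.
Proof. by rewrite addrAC (addrC c) addrAC. Qed.

Lemma cancel4 (A : zmodType) (a b a' b' c d : A): a - b + c - d = 0 -> a' - b' + c - d = 0 -> a - b = a' - b'.
Proof. move=> H1 H2; apply/(addIr (c - d)); by rewrite !addrA H1 H2. Qed.

Lemma sw (A : zmodType) (a b a' b' : A) : a - b = a' - b' -> b - b' = a - a'.
Proof. move=> E; rewrite -(subrKA a b (-b')) -opprB E opprB addrC. exact: subrKA. Qed.

Lemma cancel4b (A : zmodType) (a b c d b' c' : A) :
  a - b + c - d = 0 -> a - b' + c' - d = 0 -> c' - c = b' - b.
Proof.
move=> /eqP; rewrite subr_eq0 => /eqP H1 /eqP; rewrite subr_eq0 -H1 => /eqP H.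
move: H; rewrite -!addrA => /addrI H.
apply: esym; apply: sw; by rewrite addrC H addrC.
Qed.

Lemma act0 (G : Type) (mul : G -> G -> G) (one : G) (A : zmodType)
  (act : G -> A -> A) : module_axioms mul one act -> forall g, act g 0 = 0.
Proof. move=> hA g; have := mod_actD hA g 0 0; rewrite addr0 => H.
by move/(congr1 (fun t => t - act g 0)): H; rewrite subrr addrK. Qed.

Arguments act0 {G mul one A act}.

Lemma hom0 (P A : zmodType) (phi : P -> A) :
  (forall x y, phi (x + y) = phi x + phi y) -> phi 0 = 0.
Proof. move=> hphi; have := hphi 0 0; rewrite addr0 => H.
by move/(congr1 (fun t => t - phi 0)): H; rewrite subrr addrK. Qed.

Definition phi_of (P : zmodType) (G : Type) (A : zmodType) (one : G) (z : P -> G -> G -> A) (x : P) :=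
  (z x one one - z 0 one one)%R.

Arguments phi_of {P G A} one z x.

Section Key.
Variables (G : Type) (mul : G -> G -> G) (one : G) (inv : G -> G)
  (hG : group_axioms mul one inv)
  (P A : zmodType) (actP : G -> P -> P) (actA : G -> A -> A)
  (hP : module_axioms mul one actP) (hA : module_axioms mul one actA)
  (z : P -> G -> G -> A).
Hypothesis Hz : forall p n k m h g,
  z p k h - z (p + n) k (mul h g) + z (n + actP k m) (mul k h) g
  - actA k (z m h g) = 0.

Let mul1 := grp_mul1g hG.

Lemma base k h g : z 0 k h - z 0 k (mul h g) + z 0 (mul k h) g - actA k (z 0 h g) = 0.
Proof. by have := Hz 0 0 k 0 h g; rewrite addr0 (act0 hP) addr0. Qed.

Lemma L1 p k h g : z p k (mul h g) - z 0 k (mul h g) = z p k h - z 0 k h.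
Proof.
have := Hz p 0 k 0 h g; rewrite addr0 (act0 hP) addr0 => H.
by apply: sw; apply: cancel4 H (base k h g).
Qed.

Lemma L2 n k h g : z n (mul k h) g - z 0 (mul k h) g = z n k (mul h g) - z 0 k (mul h g).
Proof.
have := Hz 0 n k 0 h g; rewrite add0r (act0 hP) addr0 => H.
exact: cancel4b (base k h g) H.
Qed.

Lemma rep m h g : z m h g = z 0 h g + phi_of one z m.
Proof.
have e1 := L2 m one h g; rewrite mul1 in e1.
have e2 := L1 m one one (mul h g); rewrite mul1 in e2.
rewrite /phi_of -e2 -e1 addrC. by rewrite subrK.
Qed.

Lemma phirel n k m : phi_of one z (n + actP k m) = phi_of one z n + actA k (phi_of one z m).
Proof.
have := Hz 0 n k m one one.
rewrite -[z 0 k one]addr0 add0r (rep n) (rep (n + actP k m)) (rep m one one) (mod_actD hA).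
rewrite split4 base add0r => /eqP; rewrite subr_eq0 => /eqP H.
by rewrite -H add0r addNKr.
Qed.

Lemma all_facts :
  (forall m h g, z m h g = z 0 h g + phi_of one z m) /\
  is_equiv_hom actP actA (phi_of one z) /\ grp_Z2 mul actA (fun g h => z 0 g h).
Proof.
split; first exact: rep.
split; last by move=> g h k; apply: neg4; apply: base.
split.
  by move=> x y; rewrite -{1}[y](mod_act1 hP) phirel (mod_act1 hA).
by move=> g x; rewrite -[actP g x]add0r phirel /phi_of subrr add0r.
Qed.
End Key.

Theorem mainTheorem16
  (G : Type) (mul : G -> G -> G) (one : G) (inv : G -> G)
  (hG : group_axioms mul one inv)
  (P A : zmodType) (actP : G -> P -> P) (actA : G -> A -> A)
  (hP : module_axioms mul one actP) (hA : module_axioms mul one actA) :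
  let Z2E := xZ2 mul (fun x y : P => x + y) actP (fun _ : P => one) actA in
  let B2E := xB2 mul (fun _ : P => one) actA in
  exists F : (P -> G -> G -> A) -> (P -> A) * (G -> G -> A),
    (forall z, Z2E z ->
       is_equiv_hom actP actA (F z).1 /\ grp_Z2 mul actA (F z).2) /\
    (forall z z', Z2E z -> Z2E z' ->
       (forall x, (F (fun m h g => z m h g + z' m h g)).1 x
                  = (F z).1 x + (F z').1 x) /\
       grp_B2 mul actA (fun g h => (F (fun m h g => z m h g + z' m h g)).2 g h
                  - ((F z).2 g h + (F z').2 g h))) /\
    (forall (phi : P -> A) (c : G -> G -> A),
       is_equiv_hom actP actA phi -> grp_Z2 mul actA c ->
       exists z, Z2E z /\ (forall x, (F z).1 x = phi x) /\
                 grp_B2 mul actA (fun g h => (F z).2 g h - c g h)) /\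
    (forall z, Z2E z ->
       ((forall x, (F z).1 x = 0) /\ grp_B2 mul actA (F z).2) <-> B2E z).
Proof.
move=> Z2E B2E.
have mul1 := grp_mul1g hG.
have toHz : forall z, Z2E z -> forall p n k m h g,
  z p k h - z (p + n) k (mul h g) + z (n + actP k m) (mul k h) g
  - actA k (z m h g) = 0.
  move=> z hz p n k m h g; have := hz p n k m h g; by rewrite /xd2 /= !mul1.
have facts := fun z (hz : Z2E z) => @all_facts _ _ _ _ hG _ _ _ _ hP hA _ (toHz z hz).
exists (fun z => (phi_of one z, fun g h => z 0 g h)).
split.
  by move=> z hz; have [_ [e1 e2]] := facts z hz.
split.
  move=> z z' _ _; split.
    by move=> x /=; rewrite /phi_of opprD addrACA.
  by exists (fun _ => 0) => g h /=; rewrite subrr (act0 hA) subr0 addr0.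
split.
  move=> phi c [hphi1 hphi2] hc.
  have phi0 := hom0 _ _ _ hphi1.
  exists (fun m h g => c h g + phi m); split.
    move=> p n k m h g; rewrite /xd2 /= !mul1 (mod_actD hA) split4.
    rewrite neg4 ?add0r; last exact: hc.
    by rewrite hphi1 hphi1 hphi2 opprD addNKr addKr subrr.
  split.
    by move=> x /=; rewrite /phi_of phi0 opprD addrACA subrr add0r subr0.
  by exists (fun _ => 0) => g h /=; rewrite phi0 addr0 subrr (act0 hA) subr0 addr0.
move=> z hz; have [rep _] := facts z hz; split.
  move=> [/= h1 [f /= hf]]; exists f => m h g.
  rewrite /xd1 /= mul1 rep h1 addr0 hf /=. exact: reord.
move=> [f hf]; split.
  by move=> x /=; rewrite /phi_of !hf subrr.
by exists f => g h /=; rewrite hf /xd1 /= mul1 reord.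
Qed.
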